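(* Let $\kappa>0$ and define, for $\alpha>0$, $$g_\kappa(\alpha)=1-\exp\!\Big(-\big(\kappa\,\Gamma(\tfrac{1}{\alpha}+1)\big)^{\alpha}\Big).$$ (i) If $\kappa\le 1$, then $$\inf_{\alpha\in(0,\infty)} g_\kappa(\alpha)=\lim_{\alpha\to+\infty} g_\kappa(\alpha)=\begin{cases}0,&\kappa<1,\\ 1-e^{-e^{-\gamma}},&\kappa=1,\end{cases}$$ where $\gamma=\sum_{n=1}^\infty\big[\frac1n-\ln(1+\frac1n)\big]$ is Euler's constant. (ii) If $\kappa>1$, then the function $\varphi_\kappa(x):=(x-1)\psi(x)-\ln(\kappa\Gamma(x))$ has a unique zero $x_0(\kappa)$ on $(1,\infty)$, and $$\min_{\alpha\in(0,\infty)} g_\kappa(\alpha)=g_\kappa(\alpha_0(\kappa)),\qquad \alpha_0(\kappa)=\frac{1}{x_0(\kappa)-1}.$$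
   Context: $\Gamma$ denotes the Gamma function and $\psi=\Gamma'/\Gamma$ the digamma function. Interpretation: if $X$ is a Weibull random variable with parameters $\alpha>0,\theta>0$, i.e. with density $f(x)=\frac{\alpha}{\theta}x^{\alpha-1}e^{-x^\alpha/\theta}$ for $x>0$, then $EX=\theta^{1/\alpha}\Gamma(\frac1\alpha+1)$ and $P(X\le\kappa EX)=g_\kappa(\alpha)$ (independent of $\theta$). *)

(* Defs.v *)
From Stdlib Require Import Reals.
From Coquelicot Require Import Coquelicot.
Open Scope R_scope.

Definition Gamma (x : R) : R :=
  RInt_gen (fun t => Rpower t (x - 1) * exp (- t))
           (at_right 0) (Rbar_locally p_infty).

Definition digamma (x : R) : R := Derive Gamma x / Gamma x.

Definition euler_gamma : R :=
  Series (fun n : nat => / INR (S n) - ln (1 + / INR (S n))).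

Definition g (kappa alpha : R) : R :=
  1 - exp (- Rpower (kappa * Gamma (/ alpha + 1)) alpha).

Definition phi (kappa x : R) : R :=
  (x - 1) * digamma x - ln (kappa * Gamma x).

(* Main.v *)
Require Import Defs.
From Stdlib Require Import Reals Lra Lia Factorial ZArith.
From Coquelicot Require Import Coquelicot.
Open Scope R_scope.

Lemma ln_le_sub1 y : 0 < y -> ln y <= y - 1.
Proof. intros Hy. generalize (exp_ineq1_le (ln y)). rewrite exp_ln; lra. Qed.

Lemma ln1p_lower y : 0 <= y -> y / (1 + y) <= ln (1 + y).
Proof.
  intros Hy.
  assert (H := ln_le_sub1 (/ (1 + y)) ltac:(apply Rinv_0_lt_compat; lra)).
  rewrite ln_Rinv in H by lra.
  assert (/ (1 + y) - 1 = - (y / (1 + y))) by (field; lra). lra.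
Qed.

Lemma ln1p_upper y : 0 <= y -> ln (1 + y) <= y.
Proof. intros Hy. generalize (ln_le_sub1 (1 + y) ltac:(lra)); lra. Qed.

Lemma young l p q : 0 <= l <= 1 ->
  exp (l * p + (1 - l) * q) <= l * exp p + (1 - l) * exp q.
Proof.
  intros Hl. set (m := l * p + (1 - l) * q).
  assert (Ep : exp p = exp m * exp (p - m)) by (rewrite <- exp_plus; f_equal; ring).
  assert (Eq : exp q = exp m * exp (q - m)) by (rewrite <- exp_plus; f_equal; ring).
  generalize (exp_ineq1_le (p - m)) (exp_ineq1_le (q - m)) (exp_pos m). intros H1 H2 H3.
  rewrite Ep, Eq.
  assert (l * (exp m * exp (p - m)) >= l * (exp m * (1 + (p - m)))).
  { apply Rle_ge, Rmult_le_compat_l; [lra|]. apply Rmult_le_compat_l; lra. }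
  assert ((1 - l) * (exp m * exp (q - m)) >= (1 - l) * (exp m * (1 + (q - m)))).
  { apply Rle_ge, Rmult_le_compat_l; [lra|]. apply Rmult_le_compat_l; lra. }
  assert (l * (exp m * (1 + (p - m))) + (1 - l) * (exp m * (1 + (q - m))) = exp m).
  { unfold m; ring. }
  lra.
Qed.

Lemma exp_le x y : x <= y -> exp x <= exp y.
Proof. intros [H|H]. left; apply exp_increasing; auto. subst; lra. Qed.

Definition fg (x t : R) : R := Rpower t (x - 1) * exp (- t).

Lemma fg_exp x t : 0 < t -> fg x t = exp ((x - 1) * ln t - t).
Proof. intros. unfold fg, Rpower. rewrite <- exp_plus. f_equal; ring. Qed.

Lemma fg_pos x t : 0 < fg x t.
Proof. unfold fg, Rpower. apply Rmult_lt_0_compat; apply exp_pos. Qed.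

Lemma Rpower_cont y t : 0 < t -> continuous (fun s => Rpower s y) t.
Proof.
  intros Ht. apply continuity_pt_filterlim. apply derivable_continuous_pt.
  exists (y * Rpower t (y - 1)). apply derivable_pt_lim_power; auto.
Qed.

Lemma fg_cont x t : 0 < t -> continuous (fg x) t.
Proof.
  intros Ht. unfold fg. apply (continuous_mult (fun s => Rpower s (x - 1)) (fun s => exp (- s))).
  - apply Rpower_cont; auto.
  - apply (ex_derive_continuous (K:=R_AbsRing) (V:=R_NormedModule)). auto_derive. auto.
Qed.

Section ExGen.
Variable f : R -> R.
Hypothesis fc : forall t, 0 < t -> continuous f t.
Hypothesis fp : forall t, 0 < t -> 0 <= f t.

Lemma exR a b : 0 < a -> a <= b -> ex_RInt f a b.
Proof.
  intros Ha Hab. apply (ex_RInt_continuous (V:=R_CompleteNormedModule)). intros z Hz.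
  apply fc. rewrite Rmin_left in Hz by lra. lra.
Qed.

Lemma RInt_mono_bounds a b a' b' : 0 < a' -> a' <= a -> a <= b -> b <= b' ->
  RInt f a b <= RInt f a' b'.
Proof.
  intros H1 H2 H3 H4.
  rewrite <- (RInt_Chasles f a' a b') by (apply exR; lra).
  rewrite <- (RInt_Chasles f a b b') by (apply exR; lra).
  assert (0 <= RInt f a' a) by (apply RInt_ge_0; [lra|apply exR; lra|intros; apply fp; lra]).
  assert (0 <= RInt f b b') by (apply RInt_ge_0; [lra|apply exR; lra|intros; apply fp; lra]).
  change (RInt f a b <= RInt f a' a + (RInt f a b + RInt f b b')). lra.
Qed.

Lemma ex_gen_pos (B : R) :
  (forall a b, 0 < a <= 1 -> 1 <= b -> RInt f a b <= B) ->
  exists S, is_RInt_gen f (at_right 0) (Rbar_locally p_infty) S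
    /\ (forall a b, 0 < a <= 1 -> 1 <= b -> RInt f a b <= S).
Proof.
  intros HB.
  set (E := fun y => exists a b, (0 < a <= 1 /\ 1 <= b) /\ y = RInt f a b).
  assert (bE : bound E).
  { exists B. intros y [a [b [[Ha Hb] ->]]]. auto. }
  assert (nE : exists y, E y) by (exists (RInt f 1 1), 1, 1; repeat split; lra).
  destruct (completeness E bE nE) as [S [HS1 HS2]].
  exists S. split.
  2:{ intros a b Ha Hb. apply HS1. exists a, b; auto. }
  intros P [eps HP].
  assert (Hex : exists a0 b0, (0 < a0 <= 1 /\ 1 <= b0) /\ S - eps < RInt f a0 b0).
  { destruct (Classical_Prop.classic (exists a0 b0, (0 < a0 <= 1 /\ 1 <= b0) /\ S - eps < RInt f a0 b0)) as [H|H]; auto.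
    exfalso. assert (S <= S - eps). 2:{ generalize (cond_pos eps); lra. }
    apply HS2. intros y [a [b [Hab ->]]]. apply Rnot_lt_le. intros Hc. apply H. exists a, b; auto. }
  destruct Hex as [a0 [b0 [[Ha0 Hb0] Hlt]]].
  apply Filter_prod with (fun a => 0 < a < a0) (fun b => b0 < b).
  - exists (mkposreal a0 (proj1 Ha0)). intros y Hy Hy0. split; auto.
    change (Rabs (y - 0) < a0) in Hy. rewrite Rminus_0_r, Rabs_right in Hy; lra.
  - exists b0. auto.
  - intros a b Ha Hb. simpl. exists (RInt f a b). split.
    + apply (RInt_correct (V:=R_CompleteNormedModule)), exR; lra.
    + apply HP. change (Rabs (RInt f a b - S) < eps).
      assert (RInt f a b <= S) by (apply HS1; exists a, b; repeat split; lra).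
      assert (RInt f a0 b0 <= RInt f a b) by (apply RInt_mono_bounds; lra).
      rewrite Rabs_left1; lra.
Qed.
End ExGen.

Definition Kb (y : R) := Rabs y * ln (2 * (Rabs y + 1)).

Lemma ln_bound y t : 1 <= t -> y * ln t <= t / 2 + Kb y.
Proof.
  intros Ht. unfold Kb. set (m := 2 * (Rabs y + 1)).
  assert (Hy0 : 0 <= Rabs y) by apply Rabs_pos.
  assert (Hm : 0 < m) by (unfold m; lra).
  assert (Hl : 0 <= ln t) by (rewrite <- ln_1; apply ln_le; lra).
  assert (Hlm : 0 <= ln m) by (rewrite <- ln_1; apply ln_le; unfold m; lra).
  assert (E : ln t = ln (t / m) + ln m).
  { rewrite <- ln_mult by (try apply Rdiv_lt_0_compat; lra). f_equal. field. lra. }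
  assert (H1 := ln_le_sub1 (t / m) ltac:(apply Rdiv_lt_0_compat; lra)).
  assert (H2 : y * ln t <= Rabs y * ln t).
  { apply Rmult_le_compat_r; auto. apply Rle_abs. }
  assert (H3 : Rabs y * (t / m) <= t / 2).
  { assert (Rabs y * / m <= / 2).
    { apply (Rmult_le_reg_r m); auto. rewrite Rmult_assoc, Rinv_l by lra. unfold m. lra. }
    replace (Rabs y * (t / m)) with (t * (Rabs y * / m)) by (unfold Rdiv; ring).
    nra. }
  assert (H4 : Rabs y * ln t <= Rabs y * (t / m) + Rabs y * ln m).
  { rewrite E. rewrite <- Rmult_plus_distr_l. apply Rmult_le_compat_l; auto. lra. }
  lra.
Qed.

Lemma fg_bound_inf x t : 1 <= t -> fg x t <= exp (Kb (x - 1)) * exp (- t / 2).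
Proof.
  intros Ht. rewrite fg_exp by lra. rewrite <- exp_plus. apply exp_le.
  generalize (ln_bound (x - 1) t Ht). lra.
Qed.

Lemma RInt_pow_01 x a : 0 < x -> 0 < a -> RInt (fun t => Rpower t (x - 1)) a 1 = (1 - Rpower a x) / x.
Proof.
  intros Hx Ha.
  assert (H : is_RInt (fun t => Rpower t (x - 1)) a 1
             (minus ((fun t => Rpower t x / x) 1) ((fun t => Rpower t x / x) a))).
  { apply (is_RInt_derive (V:=R_CompleteNormedModule) (fun t => Rpower t x / x)).
    - intros z Hz. assert (0 < z).
      { destruct (Rle_dec a 1); [rewrite Rmin_left in Hz|rewrite Rmin_right in Hz]; lra. }
      apply is_derive_Reals.
      replace (Rpower z (x - 1)) with ((x * Rpower z (x - 1)) * / x) by (field; lra).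
      apply derivable_pt_lim_scal_right. apply derivable_pt_lim_power; auto.
    - intros z Hz. assert (0 < z).
      { destruct (Rle_dec a 1); [rewrite Rmin_left in Hz|rewrite Rmin_right in Hz]; lra. }
      apply Rpower_cont; auto. }
  apply (is_RInt_unique (V:=R_CompleteNormedModule)) in H. rewrite H. unfold minus, plus, opp; simpl.
  replace (Rpower 1 x) with 1 by (unfold Rpower; rewrite ln_1, Rmult_0_r, exp_0; auto). field. lra.
Qed.

Lemma RInt_expm_1b C b : 1 <= b -> RInt (fun t => C * exp (- t / 2)) 1 b = 2 * C * (exp (- (1) / 2) - exp (- b / 2)).
Proof.
  intros Hb.
  assert (H : is_RInt (fun t => C * exp (- t / 2)) 1 b
             (minus ((fun t => - 2 * C * exp (- t / 2)) b) ((fun t => - 2 * C * exp (- t / 2)) 1))).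
  { apply (is_RInt_derive (V:=R_CompleteNormedModule) (fun t => - 2 * C * exp (- t / 2))).
    - intros z Hz. auto_derive; auto. unfold Rdiv. field.
    - intros z Hz. apply (ex_derive_continuous (K:=R_AbsRing) (V:=R_NormedModule)). auto_derive. auto. }
  apply (is_RInt_unique (V:=R_CompleteNormedModule)) in H. rewrite H. unfold minus, plus, opp; simpl. ring.
Qed.

Lemma fg_RInt_bound x a b : 0 < x -> 0 < a <= 1 -> 1 <= b ->
  RInt (fg x) a b <= / x + 2 * exp (Kb (x - 1)).
Proof.
  intros Hx Ha Hb.
  assert (Hc : forall t, 0 < t -> continuous (fg x) t) by (intros; apply fg_cont; auto).
  rewrite <- (RInt_Chasles (fg x) a 1 b) by (apply exR; auto; lra).
  change (RInt (fg x) a 1 + RInt (fg x) 1 b <= / x + 2 * exp (Kb (x - 1))).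
  assert (H1 : RInt (fg x) a 1 <= RInt (fun t => Rpower t (x - 1)) a 1).
  { apply RInt_le; try lra. apply exR; auto; lra.
    apply exR; try lra. intros; apply Rpower_cont; auto.
    intros t Ht. unfold fg. rewrite <- (Rmult_1_r (Rpower t (x - 1))) at 2.
    apply Rmult_le_compat_l. unfold Rpower; left; apply exp_pos.
    rewrite <- exp_0. apply exp_le. lra. }
  rewrite RInt_pow_01 in H1 by lra.
  assert (H2 : RInt (fg x) 1 b <= RInt (fun t => exp (Kb (x - 1)) * exp (- t / 2)) 1 b).
  { apply RInt_le; try lra. apply exR; auto; lra.
    apply (ex_RInt_continuous (V:=R_CompleteNormedModule)). intros; apply (ex_derive_continuous (K:=R_AbsRing) (V:=R_NormedModule)). auto_derive. auto.
    intros t Ht. apply fg_bound_inf. lra. }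
  rewrite RInt_expm_1b in H2 by lra.
  assert (0 < Rpower a x) by (unfold Rpower; apply exp_pos).
  assert (0 < exp (- b / 2)) by apply exp_pos.
  assert (exp (- (1) / 2) <= 1) by (generalize (exp_le (- (1) / 2) 0 ltac:(lra)); rewrite exp_0; auto).
  assert (0 < exp (Kb (x - 1))) by apply exp_pos.
  assert ((1 - Rpower a x) / x <= / x).
  { unfold Rdiv. rewrite <- (Rmult_1_l (/ x)) at 2. apply Rmult_le_compat_r. left; apply Rinv_0_lt_compat; auto. lra. }
  assert (2 * exp (Kb (x - 1)) * (exp (- (1) / 2) - exp (- b / 2)) <= 2 * exp (Kb (x - 1))).
  { rewrite <- (Rmult_1_r (2 * exp (Kb (x - 1)))) at 2. apply Rmult_le_compat_l; lra. }
  lra.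
Qed.

Lemma PF0 : ProperFilter' (at_right 0).
Proof. apply Proper_StrongProper, at_right_proper_filter. Qed.
Lemma PFi : ProperFilter' (Rbar_locally p_infty).
Proof. apply Proper_StrongProper, Rbar_locally_filter. Qed.

Lemma Gamma_is x : 0 < x -> is_RInt_gen (fg x) (at_right 0) (Rbar_locally p_infty) (Gamma x).
Proof.
  intros Hx.
  destruct (ex_gen_pos (fg x) (fun t Ht => fg_cont x t Ht) (fun t _ => Rlt_le _ _ (fg_pos x t))
             (/ x + 2 * exp (Kb (x - 1))) (fun a b Ha Hb => fg_RInt_bound x a b Hx Ha Hb)) as [S [HS _]].
  unfold Gamma. fold (fg x).
  rewrite (is_RInt_gen_unique (V:=R_CompleteNormedModule) (Fa:=at_right 0) (Fb:=Rbar_locally p_infty) (FFa:=PF0) (FFb:=PFi) (fg x) S HS).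
  exact HS.
Qed.

Lemma young_fg a b l A B t : 0 < t -> 0 <= l <= 1 ->
  exp (- (l * A + (1 - l) * B)) * fg (l * a + (1 - l) * b) t
  <= l * exp (- A) * fg a t + (1 - l) * exp (- B) * fg b t.
Proof.
  intros Ht Hl. rewrite !fg_exp by auto. rewrite !Rmult_assoc. rewrite <- !exp_plus.
  set (P := - A + ((a - 1) * ln t - t)). set (Q := - B + ((b - 1) * ln t - t)).
  replace (- (l * A + (1 - l) * B) + ((l * a + (1 - l) * b - 1) * ln t - t))
    with (l * P + (1 - l) * Q) by (unfold P, Q; ring).
  apply young; auto.
Qed.

Lemma FP0 : filter_prod (at_right 0) (Rbar_locally p_infty) (fun ab => 0 < fst ab < 1 /\ 1 < snd ab).
Proof.
  apply Filter_prod with (fun a => 0 < a < 1) (fun b => 1 < b).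
  - exists (mkposreal 1 Rlt_0_1). intros y Hy Hy0. split; auto.
    change (Rabs (y - 0) < 1) in Hy. rewrite Rminus_0_r, Rabs_right in Hy; lra.
  - exists 1. auto.
  - intros a b Ha Hb. simpl. auto.
Qed.

Lemma FP_impl (P : R * R -> Prop) :
  (forall a b, 0 < a < 1 -> 1 < b -> P (a, b)) ->
  filter_prod (at_right 0) (Rbar_locally p_infty) P.
Proof.
  intros H. apply (filter_imp (fun ab => 0 < fst ab < 1 /\ 1 < snd ab)).
  - intros [a b] [H1 H2]. apply H; auto.
  - apply FP0.
Qed.

Lemma Gamma_young a b l A B : 0 < a -> 0 < b -> 0 <= l <= 1 ->
  exp (- (l * A + (1 - l) * B)) * Gamma (l * a + (1 - l) * b)
  <= l * exp (- A) * Gamma a + (1 - l) * exp (- B) * Gamma b.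
Proof.
  intros Ha Hb Hl.
  assert (Hc : 0 < l * a + (1 - l) * b) by nra.
  set (K := exp (- (l * A + (1 - l) * B))).
  assert (H1 := is_RInt_gen_scal (Fa:=at_right 0) (Fb:=Rbar_locally p_infty) _ K _ (Gamma_is _ Hc)).
  assert (H2 := is_RInt_gen_scal (Fa:=at_right 0) (Fb:=Rbar_locally p_infty) _ (l * exp (- A)) _ (Gamma_is _ Ha)).
  assert (H3 := is_RInt_gen_scal (Fa:=at_right 0) (Fb:=Rbar_locally p_infty) _ ((1 - l) * exp (- B)) _ (Gamma_is _ Hb)).
  assert (H4 := is_RInt_gen_plus (Fa:=at_right 0) (Fb:=Rbar_locally p_infty) _ _ _ _ H2 H3).
  assert (F1 : filter_prod (at_right 0) (Rbar_locally p_infty) (fun ab => fst ab <= snd ab)).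
  { apply FP_impl. intros; simpl; lra. }
  assert (F2 : filter_prod (at_right 0) (Rbar_locally p_infty) (fun ab => forall t, fst ab <= t <= snd ab ->
     norm (scal K (fg (l * a + (1 - l) * b) t)) <=
     plus (scal (l * exp (- A)) (fg a t)) (scal ((1 - l) * exp (- B)) (fg b t)))).
  { apply FP_impl. intros a0 b0 H01 H02 t Ht. simpl in Ht.
    change (Rabs (K * fg (l * a + (1 - l) * b) t) <= l * exp (- A) * fg a t + (1 - l) * exp (- B) * fg b t).
    rewrite Rabs_right. apply young_fg; lra.
    apply Rle_ge, Rmult_le_pos; [left; apply exp_pos| left; apply fg_pos]. }
  assert (H5 := RInt_gen_norm (V:=R_CompleteNormedModule) (Fa:=at_right 0) (Fb:=Rbar_locally p_infty) _ _ _ _ F1 F2 H1 H4).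
  change (Rabs (K * Gamma (l * a + (1 - l) * b)) <= l * exp (- A) * Gamma a + (1 - l) * exp (- B) * Gamma b) in H5.
  generalize (Rle_abs (K * Gamma (l * a + (1 - l) * b))). lra.
Qed.

Lemma lim_inf_0 (F : R -> R) C : 0 < C ->
  (forall t, 1 <= t -> Rabs (F t) <= C * exp (- t / 2)) ->
  filterlim F (Rbar_locally p_infty) (locally 0).
Proof.
  intros HC HF. apply filterlim_locally. intros eps.
  exists (Rmax 1 (- 2 * ln (eps / C))). intros t Ht.
  change (Rabs (F t - 0) < eps). rewrite Rminus_0_r.
  assert (H1 : 1 <= t) by (generalize (Rmax_l 1 (- 2 * ln (eps / C))); lra).
  assert (H2 : - 2 * ln (eps / C) < t) by (generalize (Rmax_r 1 (- 2 * ln (eps / C))); lra).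
  assert (He : 0 < eps / C) by (apply Rdiv_lt_0_compat; [apply cond_pos| auto]).
  assert (H3 : exp (- t / 2) < eps / C).
  { rewrite <- (exp_ln (eps / C)) by auto. apply exp_increasing. lra. }
  apply Rle_lt_trans with (1 := HF t H1).
  apply (Rmult_lt_compat_l C) in H3; auto.
  replace (C * (eps / C)) with (pos eps) in H3 by (field; lra). auto.
Qed.

Lemma lim_0_pow (F : R -> R) x : 0 < x ->
  (forall t, 0 < t -> Rabs (F t) <= Rpower t x) ->
  filterlim F (at_right 0) (locally 0).
Proof.
  intros Hx HF. apply filterlim_locally. intros eps.
  assert (Hd : 0 < exp (ln eps / x)) by apply exp_pos.
  exists (mkposreal _ Hd). intros t Ht Ht0.
  change (Rabs (t - 0) < exp (ln eps / x)) in Ht. rewrite Rminus_0_r, Rabs_right in Ht by lra.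
  change (Rabs (F t - 0) < eps). rewrite Rminus_0_r.
  apply Rle_lt_trans with (1 := HF t Ht0). unfold Rpower.
  rewrite <- (exp_ln eps) by apply cond_pos. apply exp_increasing.
  apply ln_increasing in Ht; auto. rewrite ln_exp in Ht.
  apply (Rmult_lt_compat_l x) in Ht; auto.
  replace (x * (ln eps / x)) with (ln eps) in Ht by (field; lra). lra.
Qed.

Lemma Gamma_1 : Gamma 1 = 1.
Proof.
  set (F := fun t : R => - exp (- t)).
  assert (HD : forall t, Derive F t = exp (- t)).
  { intros t. apply is_derive_unique. unfold F. auto_derive; auto. ring. }
  assert (C1 : filter_prod (at_right 0) (Rbar_locally p_infty) (fun ab => forall x,
      Rmin (fst ab) (snd ab) <= x <= Rmax (fst ab) (snd ab) -> ex_derive F x)).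
  { apply FP_impl. intros a b _ _ x _. unfold F; auto_derive; auto. }
  assert (C2 : filter_prod (at_right 0) (Rbar_locally p_infty) (fun ab => forall x,
      Rmin (fst ab) (snd ab) <= x <= Rmax (fst ab) (snd ab) -> continuous (Derive F) x)).
  { apply FP_impl. intros a b _ _ x _. apply (continuous_ext (fun t => exp (- t))).
    intros; rewrite HD; auto.
    apply (ex_derive_continuous (K:=R_AbsRing) (V:=R_NormedModule)); auto_derive; auto. }
  assert (L1 : filterlim F (at_right 0) (locally (-1))).
  { apply (filterlim_filter_le_1 _ (@filter_le_within R (locally 0) (@filter_filter _ _ (locally_filter (0:R))) (fun u => 0 < u))).
    replace (-1) with (F 0) by (unfold F; rewrite Ropp_0, exp_0; auto).
    apply (ex_derive_continuous (K:=R_AbsRing) (V:=R_NormedModule)). unfold F. auto_derive; auto. }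
  assert (L2 : filterlim F (Rbar_locally p_infty) (locally 0)).
  { apply (lim_inf_0 F 1); [lra|]. intros t Ht. unfold F. rewrite Rabs_Ropp, Rabs_right.
    rewrite Rmult_1_l. apply exp_le. lra. left; apply exp_pos. }
  assert (H := is_RInt_gen_Derive (Fa:=at_right 0) (Fb:=Rbar_locally p_infty) F (-1) 0 C1 C2 L1 L2).
  assert (H0 : is_RInt_gen (fg 1) (at_right 0) (Rbar_locally p_infty) (0 - -1)).
  { apply (is_RInt_gen_ext (Derive F)); [|exact H]. apply FP_impl. intros a b _ _ t _.
    rewrite HD. unfold fg, Rpower. replace ((1 - 1) * ln t) with 0 by ring. rewrite exp_0. symmetry; apply Rmult_1_l. }
  unfold Gamma. fold (fg 1).
  rewrite (is_RInt_gen_unique (V:=R_CompleteNormedModule) (FFa:=PF0) (FFb:=PFi) _ _ H0). ring.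
Qed.

Lemma locally_pos z : 0 < z -> locally z (fun y => 0 < y).
Proof.
  intros Hz. exists (mkposreal z Hz). intros y Hy.
  change (Rabs (y - z) < z) in Hy. apply Rabs_def2 in Hy. lra.
Qed.

Lemma Gamma_succ x : 0 < x -> Gamma (x + 1) = x * Gamma x.
Proof.
  intros Hx.
  set (F := fun t : R => - fg (x + 1) t).
  set (G := fun t : R => fg (x + 1) t - x * fg x t).
  assert (HdF : forall t, 0 < t -> is_derive F t (G t)).
  { intros t Ht. unfold F, G, fg, Rpower. auto_derive. auto.
    replace (x + 1 - 1) with x by ring.
    replace (exp ((x - 1) * ln t)) with (exp (x * ln t) * / t).
    field. lra.
    replace ((x - 1) * ln t) with (x * ln t + - ln t) by ring. rewrite exp_plus, exp_Ropp, exp_ln; auto. }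
  assert (HD : forall t, 0 < t -> Derive F t = G t).
  { intros t Ht. apply is_derive_unique. auto. }
  assert (C1 : filter_prod (at_right 0) (Rbar_locally p_infty) (fun ab => forall z,
      Rmin (fst ab) (snd ab) <= z <= Rmax (fst ab) (snd ab) -> ex_derive F z)).
  { apply FP_impl. intros a b Ha Hb z Hz. simpl in Hz. rewrite Rmin_left in Hz by lra.
    exists (G z). apply HdF. lra. }
  assert (C2 : filter_prod (at_right 0) (Rbar_locally p_infty) (fun ab => forall z,
      Rmin (fst ab) (snd ab) <= z <= Rmax (fst ab) (snd ab) -> continuous (Derive F) z)).
  { apply FP_impl. intros a b Ha Hb z Hz. simpl in Hz. rewrite Rmin_left in Hz by lra.
    apply (continuous_ext_loc _ G).
    - apply (filter_imp (fun y => 0 < y)). intros y Hy. symmetry; apply HD; auto.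
      apply locally_pos; lra.
    - unfold G. apply (continuous_minus (V:=R_NormedModule)). apply fg_cont; lra.
      apply (continuous_scal_r x (fg x)). apply fg_cont; lra. }
  assert (L1 : filterlim F (at_right 0) (locally 0)).
  { apply (lim_0_pow F (x + 1 - 1)); [lra|]. intros t Ht. unfold F, fg.
    rewrite Rabs_Ropp, Rabs_right.
    rewrite <- (Rmult_1_r (Rpower t (x + 1 - 1))) at 2. apply Rmult_le_compat_l.
    unfold Rpower; left; apply exp_pos.
    generalize (exp_le (- t) 0 ltac:(lra)); rewrite exp_0; auto.
    apply Rle_ge. left. apply (fg_pos (x + 1) t). }
  assert (L2 : filterlim F (Rbar_locally p_infty) (locally 0)).
  { apply (lim_inf_0 F (exp (Kb (x + 1 - 1)))); [apply exp_pos|]. intros t Ht. unfold F.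
    rewrite Rabs_Ropp, Rabs_right by (left; apply fg_pos). apply fg_bound_inf; auto. }
  assert (H := is_RInt_gen_Derive (Fa:=at_right 0) (Fb:=Rbar_locally p_infty) F 0 0 C1 C2 L1 L2).
  assert (H0 : is_RInt_gen G (at_right 0) (Rbar_locally p_infty) (0 - 0)).
  { apply (is_RInt_gen_ext (Derive F)); [|exact H]. apply FP_impl. intros a b Ha Hb t Ht.
    simpl in Ht. rewrite Rmin_left in Ht by lra. apply HD. lra. }
  assert (H1 := is_RInt_gen_minus (Fa:=at_right 0) (Fb:=Rbar_locally p_infty) _ _ _ _
     (Gamma_is (x + 1) ltac:(lra))
     (is_RInt_gen_scal (Fa:=at_right 0) (Fb:=Rbar_locally p_infty) _ x _ (Gamma_is _ Hx))).
  assert (E1 := is_RInt_gen_unique (V:=R_CompleteNormedModule) (FFa:=PF0) (FFb:=PFi) _ _ H0).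
  assert (E2 := is_RInt_gen_unique (V:=R_CompleteNormedModule) (FFa:=PF0) (FFb:=PFi) _ _ H1).
  change (RInt_gen G (at_right 0) (Rbar_locally p_infty) = Gamma (x + 1) - x * Gamma x) in E2.
  rewrite E1 in E2. lra.
Qed.

Lemma Gamma_nat n : Gamma (INR n + 1) = INR (fact n).
Proof.
  induction n.
  - simpl. rewrite Rplus_0_l. apply Gamma_1.
  - rewrite S_INR, Gamma_succ by (generalize (pos_INR n); lra).
    rewrite IHn. rewrite fact_simpl, mult_INR, S_INR. ring.
Qed.

Lemma Gamma_convex a b l : 0 < a -> 0 < b -> 0 <= l <= 1 ->
  Gamma (l * a + (1 - l) * b) <= l * Gamma a + (1 - l) * Gamma b.
Proof.
  intros Ha Hb Hl. generalize (Gamma_young a b l 0 0 Ha Hb Hl).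
  replace (- (l * 0 + (1 - l) * 0)) with 0 by ring. rewrite Ropp_0, exp_0. lra.
Qed.

Lemma Gamma_pos x : 0 < x -> 0 < Gamma x.
Proof.
  intros Hx. destruct (archimed x) as [H1 H2].
  assert (Hup : (0 < up x)%Z) by (apply lt_0_IZR; lra).
  set (n := Z.to_nat (up x)).
  assert (En : INR n = IZR (up x)).
  { unfold n. rewrite INR_IZR_INZ, Z2Nat.id; auto. lia. }
  destruct n as [|m] eqn:Hn.
  { simpl in En. lra. }
  assert (Gk : 1 <= Gamma (INR (S m))).
  { rewrite S_INR, Gamma_nat. apply (le_INR 1). apply lt_O_fact. }
  set (k := INR (S m)) in *.
  set (l := x + 1 - k).
  assert (Hl : 0 <= l <= 1) by (unfold l; lra).
  assert (Ek : k = l * x + (1 - l) * (x + 1)) by (unfold l; ring).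
  generalize (Gamma_convex x (x + 1) l Hx ltac:(lra) Hl). rewrite <- Ek.
  rewrite Gamma_succ by auto. intros H.
  destruct (Rle_or_lt (Gamma x) 0) as [Hg|Hg]; auto.
  exfalso. assert (l * Gamma x + (1 - l) * (x * Gamma x) <= 0).
  { assert (l * Gamma x <= 0) by nra. assert ((1 - l) * (x * Gamma x) <= 0).
    { apply Rmult_le_0_l. lra. nra. } lra. }
  lra.
Qed.

Definition LG (x : R) := ln (Gamma x).

Lemma LG_convex a b l : 0 < a -> 0 < b -> 0 <= l <= 1 ->
  LG (l * a + (1 - l) * b) <= l * LG a + (1 - l) * LG b.
Proof.
  intros Ha Hb Hl. generalize (Gamma_young a b l (LG a) (LG b) Ha Hb Hl).
  assert (Ga := Gamma_pos a Ha). assert (Gb := Gamma_pos b Hb).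
  assert (E1 : exp (- LG a) * Gamma a = 1).
  { unfold LG. rewrite exp_Ropp, exp_ln by auto. field. lra. }
  assert (E2 : exp (- LG b) * Gamma b = 1).
  { unfold LG. rewrite exp_Ropp, exp_ln by auto. field. lra. }
  rewrite !Rmult_assoc, E1, E2. rewrite exp_Ropp. intros H.
  replace (l * 1 + (1 - l) * 1) with 1 in H by ring.
  unfold LG in *.
  assert (Hc : 0 < l * a + (1 - l) * b) by nra.
  assert (Hg := Gamma_pos _ Hc).
  set (m := l * ln (Gamma a) + (1 - l) * ln (Gamma b)) in *.
  assert (Gamma (l * a + (1 - l) * b) <= exp m).
  { apply (Rmult_le_reg_l (/ exp m)). apply Rinv_0_lt_compat, exp_pos.
    rewrite Rinv_l by (apply Rgt_not_eq, exp_pos). lra. }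
  rewrite <- (ln_exp m). apply ln_le; auto.
Qed.

Lemma LG_succ x : 0 < x -> LG (x + 1) = LG x + ln x.
Proof.
  intros Hx. unfold LG. rewrite Gamma_succ by auto. rewrite ln_mult; auto.
  ring. apply Gamma_pos; auto.
Qed.

Lemma LG_1 : LG 1 = 0.
Proof. unfold LG. rewrite Gamma_1. apply ln_1. Qed.

Section Conv.
Variable f : R -> R.
Hypothesis fconv : forall a b l, 0 < a -> 0 < b -> 0 <= l <= 1 ->
  f (l * a + (1 - l) * b) <= l * f a + (1 - l) * f b.

Lemma conv3 a b c : 0 < a -> a < b -> b < c -> f b * (c - a) <= (c - b) * f a + (b - a) * f c.
Proof.
  intros Ha Hab Hbc. set (l := (c - b) / (c - a)).
  assert (Hl : 0 <= l <= 1).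
  { unfold l. split. apply Rmult_le_pos. lra. left; apply Rinv_0_lt_compat; lra.
    apply (Rmult_le_reg_r (c - a)). lra. unfold Rdiv. rewrite Rmult_assoc, Rinv_l by lra. lra. }
  assert (Eb : b = l * a + (1 - l) * c) by (unfold l; field; lra).
  generalize (fconv a c l Ha ltac:(lra) Hl). rewrite <- Eb. intros H.
  apply (Rmult_le_compat_r (c - a)) in H; [|lra].
  replace ((l * f a + (1 - l) * f c) * (c - a)) with ((c - b) * f a + (b - a) * f c) in H
    by (unfold l; field; lra). auto.
Qed.

Definition slope a b := (f b - f a) / (b - a).

Lemma div_le_cross u v p q : 0 < p -> 0 < q -> u * q <= v * p -> u / p <= v / q.
Proof.
  intros Hp Hq H. apply (Rmult_le_reg_r (p * q)). nra.
  replace (u / p * (p * q)) with (u * q) by (field; lra).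
  replace (v / q * (p * q)) with (v * p) by (field; lra). auto.
Qed.

Lemma slope_sym a b : slope a b = slope b a.
Proof. unfold slope. destruct (Req_dec a b). subst; auto. field. lra. Qed.

Lemma slope_mono1 a b c : 0 < a -> a < b -> b < c -> slope a b <= slope a c.
Proof.
  intros. unfold slope. apply div_le_cross; try lra. generalize (conv3 a b c); intros. nra.
Qed.

Lemma slope_mono2 a b c : 0 < a -> a < b -> b < c -> slope a c <= slope b c.
Proof.
  intros. unfold slope. apply div_le_cross; try lra. generalize (conv3 a b c); intros. nra.
Qed.

Lemma slope_mono3 a b c : 0 < a -> a < b -> b < c -> slope a b <= slope b c.
Proof.
  intros. apply Rle_trans with (slope a c). apply slope_mono1; auto. apply slope_mono2; auto.
Qed.

End Conv.

Fixpoint lsum (x : R) (n : nat) : R :=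
  match n with 0 => 0 | S m => lsum x m + ln (1 + x / INR (S m)) end.
Fixpoint hsum (n : nat) : R :=
  match n with 0 => 0 | S m => hsum m + / INR (S m) end.

Lemma lsum_S x n : lsum x (S n) = lsum x n + ln (1 + x / INR (S n)).
Proof. reflexivity. Qed.
Lemma hsum_S n : hsum (S n) = hsum n + / INR (S n).
Proof. reflexivity. Qed.

Lemma LG_shift x n : 0 < x -> LG (1 + x + INR n) - LG (1 + INR n) = LG (1 + x) + lsum x n.
Proof.
  intros Hx. induction n.
  - simpl. rewrite !Rplus_0_r, LG_1. ring.
  - change (lsum x (S n)) with (lsum x n + ln (1 + x / INR (S n))). rewrite <- Rplus_assoc, <- IHn.
    assert (Hn := pos_INR n).
    replace (1 + x + INR (S n)) with ((1 + x + INR n) + 1) by (rewrite S_INR; ring).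
    replace (1 + INR (S n)) with ((1 + INR n) + 1) by (rewrite S_INR; ring).
    rewrite !LG_succ by lra.
    replace (1 + x / INR (S n)) with ((1 + x + INR n) / (1 + INR n)).
    rewrite ln_div by lra. ring.
    rewrite S_INR. field. lra.
Qed.

Lemma LG_nat_step n : (1 <= n)%nat -> LG (1 + INR n) - LG (INR n) = ln (INR n).
Proof.
  intros Hn. assert (1 <= INR n) by (apply (le_INR 1); auto).
  rewrite Rplus_comm, LG_succ by lra. ring.
Qed.

Lemma BM_lower x n : 0 < x -> (1 <= n)%nat -> x * ln (INR n) - lsum x n <= LG (1 + x).
Proof.
  intros Hx Hn. assert (H1 : 1 <= INR n) by (apply (le_INR 1); auto).
  generalize (slope_mono3 LG LG_convex (INR n) (1 + INR n) (1 + x + INR n) ltac:(lra) ltac:(lra) ltac:(lra)).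
  unfold slope. rewrite LG_nat_step by auto. rewrite LG_shift by auto.
  replace (1 + INR n - INR n) with 1 by ring. replace (1 + x + INR n - (1 + INR n)) with x by ring.
  intros H. rewrite Rdiv_1_r in H. apply (Rmult_le_compat_l x) in H; [|lra].
  replace (x * ((LG (1 + x) + lsum x n) / x)) with (LG (1 + x) + lsum x n) in H by (field; lra).
  lra.
Qed.

Lemma BM_upper x n : 0 < x <= 1 -> LG (1 + x) <= x * ln (INR n + 1) - lsum x n.
Proof.
  intros Hx. assert (Hn := pos_INR n).
  assert (E2 : LG (1 + (INR n + 1)) - LG (1 + INR n) = ln (INR n + 1)).
  { replace (1 + (INR n + 1)) with ((1 + INR n) + 1) by ring. rewrite LG_succ by lra. rewrite (Rplus_comm 1 (INR n)). ring. }
  destruct (Req_dec x 1) as [->|Hx1].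
  - generalize (LG_shift 1 n ltac:(lra)). replace (1 + 1 + INR n) with (1 + (INR n + 1)) by ring.
    intros; lra.
  - generalize (slope_mono1 LG LG_convex (1 + INR n) (1 + x + INR n) (1 + (INR n + 1)) ltac:(lra) ltac:(lra) ltac:(lra)).
    unfold slope. rewrite E2, LG_shift by lra.
    replace (1 + (INR n + 1) - (1 + INR n)) with 1 by ring. replace (1 + x + INR n - (1 + INR n)) with x by ring.
    intros H. rewrite Rdiv_1_r in H. apply (Rmult_le_compat_l x) in H; [|lra].
    replace (x * ((LG (1 + x) + lsum x n) / x)) with (LG (1 + x) + lsum x n) in H by (field; lra).
    lra.
Qed.

Lemma lsum_le x n : 0 <= x -> lsum x n <= x * hsum n.
Proof.
  intros Hx. induction n. simpl; lra. rewrite lsum_S, hsum_S.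
  assert (0 < INR (S n)) by (apply lt_0_INR; lia).
  assert (ln (1 + x / INR (S n)) <= x / INR (S n)) by (apply ln1p_upper; apply Rdiv_le_0_compat; lra).
  unfold Rdiv in *. lra.
Qed.

Lemma lsum_ge x n : 0 <= x -> x * hsum n - lsum x n <= INR n * x ^ 2.
Proof.
  intros Hx. induction n. simpl; lra. rewrite lsum_S, hsum_S.
  assert (Hk : 1 <= INR (S n)) by (apply (le_INR 1); lia).
  set (k := INR (S n)) in *.
  assert (H1 : (x / k) / (1 + x / k) <= ln (1 + x / k)) by (apply ln1p_lower; apply Rdiv_le_0_compat; lra).
  replace ((x / k) / (1 + x / k)) with (x / (k + x)) in H1 by (field; lra).
  assert (H2 : x * / k - x / (k + x) <= x ^ 2).
  { replace (x * / k - x / (k + x)) with (x ^ 2 / (k * (k + x))) by (field; lra).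
    apply (Rmult_le_reg_r (k * (k + x))). nra. unfold Rdiv. rewrite Rmult_assoc, Rinv_l by nra.
    apply Rmult_le_compat_l. nra. nra. }
  assert (Ek : k = INR n + 1) by (unfold k; apply S_INR).
  replace (k * x ^ 2) with (INR n * x ^ 2 + x ^ 2) by (rewrite Ek; ring). unfold Rdiv in *. lra.
Qed.

Definition ga (n : nat) : R := / INR (S n) - ln (1 + / INR (S n)).

Lemma ga_sum n : @eq R (sum_n ga n) (hsum (S n) - ln (INR (S n) + 1)).
Proof.
  induction n.
  - rewrite sum_O. unfold ga. simpl hsum. replace (INR 1) with 1 by reflexivity.
    replace (1 + / 1) with (1 + 1) by field. ring.
  - rewrite sum_Sn, IHn. change (plus ?a ?b) with (a + b). unfold ga.
    change (hsum (S (S n))) with (hsum (S n) + / INR (S (S n))).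
    assert (H0 : 0 < INR (S n)) by (apply lt_0_INR; lia).
    rewrite (S_INR (S n)).
    replace (1 + / (INR (S n) + 1)) with ((INR (S n) + 1 + 1) / (INR (S n) + 1)) by (field; lra).
    rewrite ln_div by lra. ring.
Qed.

Lemma ga_pos n : 0 <= ga n.
Proof.
  unfold ga. assert (0 < INR (S n)) by (apply lt_0_INR; lia).
  generalize (ln1p_upper (/ INR (S n)) ltac:(left; apply Rinv_0_lt_compat; auto)). lra.
Qed.

Lemma ga_bound n : sum_n ga n <= 1.
Proof.
  assert (H : forall n, sum_n ga n <= 1 - / INR (S (S n))).
  { induction n0.
    - rewrite sum_O. unfold ga. replace (INR 1) with 1 by reflexivity.
      rewrite Rinv_1. generalize (ln1p_lower 1 ltac:(lra)).
      replace (INR 2) with 2 by reflexivity. lra.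
    - rewrite sum_Sn. change (plus ?a ?b) with (a + b). unfold ga at 2.
      assert (Hk : 0 < INR (S (S n0))) by (apply lt_0_INR; lia).
      generalize (ln1p_lower (/ INR (S (S n0))) ltac:(left; apply Rinv_0_lt_compat; auto)).
      replace (/ INR (S (S n0)) / (1 + / INR (S (S n0)))) with (/ INR (S (S (S n0)))).
      lra. rewrite (S_INR (S (S n0))). field. lra. }
  generalize (H n). assert (0 < / INR (S (S n))) by (apply Rinv_0_lt_compat, lt_0_INR; lia). lra.
Qed.

Lemma euler_lim : is_lim_seq (sum_n ga) euler_gamma.
Proof.
  assert (Hex : ex_finite_lim_seq (sum_n ga)).
  { apply (ex_finite_lim_seq_incr _ 1).
    - intros n. rewrite sum_Sn. change (plus ?a ?b) with (a + b). generalize (ga_pos (S n)). lra.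
    - apply ga_bound. }
  destruct Hex as [l Hl]. unfold euler_gamma. fold ga.
  unfold Series. rewrite (is_lim_seq_unique _ _ Hl). simpl. auto.
Qed.

Lemma ga_le_euler n : sum_n ga n <= euler_gamma.
Proof.
  apply is_lim_seq_incr_compare. apply euler_lim.
  intros m. rewrite sum_Sn. change (plus ?a ?b) with (a + b). generalize (ga_pos (S m)). lra.
Qed.

Lemma ga_near_euler eps : 0 < eps -> exists n, euler_gamma - eps < sum_n ga n.
Proof.
  intros He. generalize euler_lim. intros H. apply is_lim_seq_spec in H.
  destruct (H (mkposreal eps He)) as [N HN]. exists N. specialize (HN N (Nat.le_refl N)).
  simpl in HN. apply Rabs_def2 in HN. lra.
Qed.

Lemma nat_large A : exists m : nat, A < INR (S m).
Proof.
  destruct (archimed (Rmax A 0)) as [H1 H2].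
  assert (H0 : 0 <= Rmax A 0) by apply Rmax_r.
  assert (Hup : (0 < up (Rmax A 0))%Z) by (apply lt_0_IZR; lra).
  exists (Z.to_nat (up (Rmax A 0))).
  rewrite S_INR, INR_IZR_INZ, Z2Nat.id by lia.
  generalize (Rmax_l A 0). lra.
Qed.

Lemma ln_succ_le n : (1 <= n)%nat -> ln (INR n + 1) - ln (INR n) <= / INR n.
Proof.
  intros Hn. assert (H1 : 1 <= INR n) by (apply (le_INR 1); auto).
  rewrite <- ln_div by lra. replace ((INR n + 1) / INR n) with (1 + / INR n) by (field; lra).
  apply ln1p_upper. left; apply Rinv_0_lt_compat; lra.
Qed.

Lemma LG_lower x : 0 < x -> - euler_gamma * x <= LG (1 + x).
Proof.
  intros Hx. destruct (Rle_or_lt (- euler_gamma * x) (LG (1 + x))) as [H|H]; auto.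
  exfalso. set (d := - euler_gamma * x - LG (1 + x)).
  assert (Hd : 0 < d) by (unfold d; lra).
  destruct (nat_large (x / d)) as [m Hm].
  set (n := S m) in *.
  assert (Hn1 : (1 <= n)%nat) by (unfold n; lia).
  assert (HnR : 1 <= INR n) by (apply (le_INR 1); auto).
  generalize (BM_lower x n Hx Hn1) (lsum_le x n ltac:(lra)) (ga_le_euler m) (ga_sum m) (ln_succ_le n Hn1).
  fold n. intros B1 B2 B3 B4 B5.
  assert (B6 : x * / INR n < d).
  { apply (Rmult_lt_reg_r (INR n)). lra. rewrite Rmult_assoc, Rinv_l by lra.
    apply (Rmult_lt_compat_l d) in Hm; auto.
    replace (d * (x / d)) with x in Hm by (field; lra). lra. }
  assert (B7 : x * (ln (INR n + 1) - ln (INR n)) <= x * / INR n) by (apply Rmult_le_compat_l; lra).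
  assert (B8 : x * (hsum n - ln (INR n + 1)) <= x * euler_gamma) by (apply Rmult_le_compat_l; lra).
  unfold d in B6. nra.
Qed.

Lemma LG_upper_near eps : 0 < eps -> exists delta, 0 < delta /\
  forall x, 0 < x < delta -> LG (1 + x) <= x * (- euler_gamma + eps).
Proof.
  intros He. destruct (ga_near_euler (eps / 2) ltac:(lra)) as [m Hm].
  rewrite ga_sum in Hm. set (n := S m) in *.
  assert (HnR : 1 <= INR n) by (apply (le_INR 1); unfold n; lia).
  exists (Rmin 1 (eps / (2 * INR n))). split.
  { apply Rmin_pos. lra. apply Rdiv_lt_0_compat; lra. }
  intros x [Hx1 Hx2].
  assert (Hx3 : x <= 1) by (generalize (Rmin_l 1 (eps / (2 * INR n))); lra).
  assert (Hx4 : x < eps / (2 * INR n)) by (generalize (Rmin_r 1 (eps / (2 * INR n))); lra).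
  generalize (BM_upper x n ltac:(lra)) (lsum_ge x n ltac:(lra)). intros B1 B2.
  assert (B3 : INR n * x < eps / 2).
  { apply (Rmult_lt_compat_l (2 * INR n)) in Hx4; [|lra].
    replace (2 * INR n * (eps / (2 * INR n))) with eps in Hx4 by (field; lra). lra. }
  assert (B4 : INR n * x ^ 2 <= x * (eps / 2)).
  { replace (INR n * x ^ 2) with (x * (INR n * x)) by ring. apply Rmult_le_compat_l; lra. }
  assert (B5 : x * (euler_gamma - eps / 2) <= x * (hsum n - ln (INR n + 1))) by (apply Rmult_le_compat_l; lra).
  nra.
Qed.

Lemma u_lim : is_lim (fun a => a * LG (1 + / a)) p_infty (- euler_gamma).
Proof.
  apply is_lim_spec. intros eps.
  destruct (LG_upper_near (eps / 2) ltac:(generalize (cond_pos eps); lra)) as [d [Hd HL]].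
  exists (Rmax 1 (/ d)). intros a Ha.
  assert (Ha1 : 1 < a) by (generalize (Rmax_l 1 (/ d)); lra).
  assert (Ha2 : / d < a) by (generalize (Rmax_r 1 (/ d)); lra).
  assert (Hia : 0 < / a) by (apply Rinv_0_lt_compat; lra).
  assert (Hia2 : / a < d).
  { rewrite <- (Rinv_inv d). apply Rinv_lt_contravar; auto.
    apply Rmult_lt_0_compat; [apply Rinv_0_lt_compat|]; lra. }
  generalize (LG_lower (/ a) Hia) (HL (/ a) (conj Hia Hia2)). intros H1 H2.
  apply (Rmult_le_compat_l a) in H1; [|lra]. apply (Rmult_le_compat_l a) in H2; [|lra].
  replace (a * (- euler_gamma * / a)) with (- euler_gamma) in H1 by (field; lra).
  replace (a * (/ a * (- euler_gamma + eps / 2))) with (- euler_gamma + eps / 2) in H2 by (field; lra).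
  generalize (cond_pos eps). intros.
  apply Rabs_def1; lra.
Qed.

Lemma g_form kappa alpha : 0 < kappa -> 0 < alpha ->
  g kappa alpha = 1 - exp (- exp (alpha * (ln kappa + LG (1 + / alpha)))).
Proof.
  intros Hk Ha. unfold g, Rpower, LG. rewrite (Rplus_comm (/ alpha) 1).
  rewrite ln_mult; auto. apply Gamma_pos. assert (0 < / alpha) by (apply Rinv_0_lt_compat; auto). lra.
Qed.

Lemma glb_from (f : R -> R) (l : R) : (forall a, 0 < a -> l <= f a) -> is_lim f p_infty l ->
  is_glb_Rbar (fun y => exists a, 0 < a /\ y = f a) (Finite l).
Proof.
  intros Hlb Hlim. split.
  - intros y [a [Ha ->]]. simpl. auto.
  - intros b Hb. destruct b as [b| |]; simpl; auto.
    + destruct (Rle_or_lt b l) as [H|H]; auto. exfalso.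
      apply is_lim_spec in Hlim. destruct (Hlim (mkposreal (b - l) ltac:(lra))) as [M HM].
      set (a := Rmax 1 (M + 1)).
      assert (Ha : M < a) by (generalize (Rmax_r 1 (M + 1)); unfold a; lra).
      assert (Ha0 : 0 < a) by (generalize (Rmax_l 1 (M + 1)); unfold a; lra).
      specialize (HM a Ha). simpl in HM. apply Rabs_def2 in HM.
      specialize (Hb (f a) (ex_intro _ a (conj Ha0 eq_refl))). simpl in Hb. lra.
    + apply (Hb (f 1) (ex_intro _ 1 (conj Rlt_0_1 eq_refl))).
Qed.

Lemma part1 kappa : 0 < kappa -> kappa <= 1 ->
     let L := if Rlt_dec kappa 1 then 0 else 1 - exp (- exp (- euler_gamma)) in
     is_glb_Rbar (fun y => exists alpha, 0 < alpha /\ y = g kappa alpha) (Finite L)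
     /\ is_lim (g kappa) p_infty (Finite L).
Proof.
  intros Hk Hk1 L. unfold L. destruct (Rlt_dec kappa 1) as [Hlt|Hge].
  - assert (Hlk : ln kappa < 0) by (rewrite <- ln_1; apply ln_increasing; auto).
    assert (Hlim : is_lim (g kappa) p_infty 0).
    { apply is_lim_spec. intros eps.
      assert (He := cond_pos eps).
      exists (Rmax 1 ((ln eps - ln 2) / ln kappa)). intros a Ha.
      assert (Ha1 : 1 < a) by (generalize (Rmax_l 1 ((ln eps - ln 2) / ln kappa)); lra).
      assert (Ha2 : (ln eps - ln 2) / ln kappa < a) by (generalize (Rmax_r 1 ((ln eps - ln 2) / ln kappa)); lra).
      assert (Hx : 0 < / a < 1).
      { split. apply Rinv_0_lt_compat; lra. rewrite <- Rinv_1. apply Rinv_lt_contravar; lra. }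
      rewrite g_form by lra.
      assert (B1 := BM_upper (/ a) 1 ltac:(lra)).
      rewrite lsum_S in B1. change (lsum (/ a) 0) with 0 in B1.
      replace (INR 1) with 1 in B1 by reflexivity.
      assert (B2 : ln 1 <= ln (1 + / a / 1)).
      { apply ln_le; [lra|]. unfold Rdiv. rewrite Rinv_1. lra. }
      rewrite ln_1 in B2.
      replace (1 + 1) with 2 in B1 by ring.
      set (E := a * (ln kappa + LG (1 + / a))).
      assert (B3 : E < ln eps).
      { unfold E. assert (a * LG (1 + / a) <= ln 2).
        { apply Rle_trans with (a * (/ a * ln 2)). apply Rmult_le_compat_l; lra.
          right; field; lra. }
        assert (Eq : (ln eps - ln 2) / ln kappa * ln kappa = ln eps - ln 2) by (field; lra).
        assert ((a - (ln eps - ln 2) / ln kappa) * ln kappa < 0).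
        { replace ((a - (ln eps - ln 2) / ln kappa) * ln kappa) with (- ((a - (ln eps - ln 2) / ln kappa) * (- ln kappa))) by ring.
          assert (0 < (a - (ln eps - ln 2) / ln kappa) * (- ln kappa)) by (apply Rmult_lt_0_compat; lra). lra. }
        nra. }
      assert (B4 : exp E < eps) by (rewrite <- (exp_ln eps) by lra; apply exp_increasing; auto).
      assert (B5 := exp_pos E).
      assert (B6 : exp (- exp E) < exp 0) by (apply exp_increasing; lra). rewrite exp_0 in B6.
      assert (B7 := exp_ineq1_le (- exp E)).
      rewrite Rminus_0_r. apply Rabs_def1; lra. }
    split; auto. apply glb_from; auto.
    intros a Ha. rewrite g_form by auto.
    assert (exp (- exp (a * (ln kappa + LG (1 + / a)))) <= 1).
    { generalize (exp_le (- exp (a * (ln kappa + LG (1 + / a)))) 0). rewrite exp_0. intros HH; apply HH.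
      generalize (exp_pos (a * (ln kappa + LG (1 + / a)))). lra. }
    lra.
  - assert (Hk2 : kappa = 1) by lra. subst kappa.
    set (F := fun y => 1 - exp (- exp y)).
    assert (Hc : continuous F (- euler_gamma)).
    { apply (ex_derive_continuous (K:=R_AbsRing) (V:=R_NormedModule)). unfold F. auto_derive. auto. }
    assert (H := is_lim_comp_continuous _ F _ _ u_lim Hc).
    assert (Hlim : is_lim (g 1) p_infty (F (- euler_gamma))).
    { apply (is_lim_ext_loc (fun a => F (a * LG (1 + / a)))); auto.
      exists 0. intros a Ha. rewrite g_form by lra. rewrite ln_1, Rplus_0_l. reflexivity. }
    split; auto. apply glb_from; auto.
    intros a Ha. rewrite g_form by lra. rewrite ln_1, Rplus_0_l. unfold F.
    assert (Hia : 0 < / a) by (apply Rinv_0_lt_compat; auto).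
    assert (H1 := LG_lower (/ a) Hia).
    apply (Rmult_le_compat_l a) in H1; [|lra].
    replace (a * (- euler_gamma * / a)) with (- euler_gamma) in H1 by (field; lra).
    assert (exp (- exp (a * LG (1 + / a))) <= exp (- exp (- euler_gamma))).
    { apply exp_le. apply Ropp_le_contravar. apply exp_le. auto. }
    lra.
Qed.

Section ConvD.
Variable f : R -> R.
Hypothesis fconv : forall a b l, 0 < a -> 0 < b -> 0 <= l <= 1 ->
  f (l * a + (1 - l) * b) <= l * f a + (1 - l) * f b.

Lemma conv_deriv t : 0 < t ->
  (forall eps, 0 < eps -> exists h, 0 < h < t /\ slope f t (t + h) - slope f (t - h) t < eps) ->
  exists D, derivable_pt_lim f t D.
Proof.
  intros Ht HJ.
  set (E := fun y => exists h, 0 < h < t /\ y = slope f (t - h) t).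
  assert (Hub : forall h k, 0 < h < t -> 0 < k -> slope f (t - h) t <= slope f t (t + k)).
  { intros h k Hh Hk. apply slope_mono3; auto; lra. }
  assert (bE : bound E).
  { exists (slope f t (t + 1)). intros y [h [Hh ->]]. apply Hub; lra. }
  assert (nE : exists y, E y) by (exists (slope f (t - t / 2) t), (t / 2); split; [lra|auto]).
  destruct (completeness E bE nE) as [D [HD1 HD2]].
  assert (HDl : forall h, 0 < h < t -> slope f (t - h) t <= D).
  { intros h Hh. apply HD1. exists h; auto. }
  assert (HDu : forall k, 0 < k -> D <= slope f t (t + k)).
  { intros k Hk. apply HD2. intros y [h [Hh ->]]. apply Hub; auto. }
  exists D. intros eps Heps.
  destruct (HJ eps Heps) as [h0 [Hh0 Hj]].
  exists (mkposreal h0 (proj1 Hh0)). intros h Hh0' Hh. simpl in Hh.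
  assert (Eq : (f (t + h) - f t) / h = slope f t (t + h)).
  { unfold slope. replace (t + h - t) with h by ring. auto. }
  rewrite Eq.
  assert (M1 := HDl h0 Hh0). assert (M2 := HDu h0 ltac:(lra)).
  destruct (Rlt_or_le 0 h) as [Hp|Hn].
  - rewrite Rabs_right in Hh by lra.
    assert (A1 : slope f t (t + h) <= slope f t (t + h0)) by (apply slope_mono1; auto; lra).
    assert (A2 := HDu h Hp).
    rewrite Rabs_right by lra. lra.
  - assert (Hneg : h < 0) by lra. rewrite Rabs_left in Hh by lra.
    rewrite slope_sym. replace (t + h) with (t - - h) by ring.
    assert (A1 : slope f (t - h0) t <= slope f (t - - h) t) by (apply slope_mono2; auto; lra).
    assert (A2 := HDl (- h) ltac:(lra)).
    rewrite Rabs_left1 by lra. lra.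
Qed.
End ConvD.

Lemma ln_ge_1m z : 0 < z -> 1 - / z <= ln z.
Proof.
  intros Hz. generalize (ln_le_sub1 (/ z) ltac:(apply Rinv_0_lt_compat; auto)).
  rewrite ln_Rinv by auto. lra.
Qed.

Lemma lnm_bound s h : 0 < h < s -> ln s - ln (s - h) <= h / (s - h).
Proof.
  intros Hh. rewrite <- ln_div by lra.
  generalize (ln_le_sub1 (s / (s - h)) ltac:(apply Rdiv_lt_0_compat; lra)).
  replace (s / (s - h) - 1) with (h / (s - h)) by (field; lra). auto.
Qed.

Lemma lnp_bound s h : 0 < s -> 0 < h -> h / (s + h) <= ln (s + h) - ln s.
Proof.
  intros Hs Hh. rewrite <- ln_div by lra.
  generalize (ln_ge_1m ((s + h) / s) ltac:(apply Rdiv_lt_0_compat; lra)).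
  replace (1 - / ((s + h) / s)) with (h / (s + h)) by (field; lra). auto.
Qed.

Definition J (h s : R) := slope LG s (s + h) - slope LG (s - h) s.

Lemma J_step h s : 0 < h < s ->
  J h (s + 1) = J h s - ((ln s - ln (s - h)) / h - (ln (s + h) - ln s) / h).
Proof.
  intros Hh. unfold J, slope.
  replace (s + 1 + h) with ((s + h) + 1) by ring.
  replace (s + 1 - h) with ((s - h) + 1) by ring.
  rewrite !LG_succ by lra. field. lra.
Qed.

Lemma J_le h s : 0 < h < 1 / 2 -> h < s -> J h s <= (ln s - ln (s - h)) / h.
Proof.
  intros Hh Hs.
  assert (A : slope LG s (s + h) <= slope LG (s + 1 - h) (s + 1)).
  { apply Rle_trans with (slope LG (s + h) (s + 1 - h)).
    apply slope_mono3; auto using LG_convex; lra.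
    apply slope_mono3; auto using LG_convex; lra. }
  assert (B : slope LG (s + 1 - h) (s + 1) = slope LG (s - h) s + (ln s - ln (s - h)) / h).
  { unfold slope. replace (s + 1 - h) with ((s - h) + 1) by ring.
    rewrite !LG_succ by lra. field. lra. }
  unfold J. lra.
Qed.

Lemma e_bound t h s : 0 < h -> h <= t / 2 -> t <= s ->
  (ln s - ln (s - h)) / h - (ln (s + h) - ln s) / h <= 4 * h / (t * t).
Proof.
  intros Hh Ht Hs.
  assert (Ht0 : 0 < t) by lra.
  assert (A1 := lnm_bound s h ltac:(lra)).
  assert (A2 := lnp_bound s h ltac:(lra) Hh).
  assert (A3 : (ln s - ln (s - h)) / h - (ln (s + h) - ln s) / h <= / (s - h) - / (s + h)).
  { apply Rle_trans with (h / (s - h) / h - h / (s + h) / h).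
    unfold Rdiv at 1 3. unfold Rdiv at 3.
    assert (0 < / h) by (apply Rinv_0_lt_compat; auto).
    apply Rplus_le_compat; [apply Rmult_le_compat_r; lra| apply Ropp_le_contravar, Rmult_le_compat_r; lra].
    right. field. lra. }
  replace (/ (s - h) - / (s + h)) with (2 * h / ((s - h) * (s + h))) in A3 by (field; lra).
  apply Rle_trans with (1 := A3).
  assert (Hsh : (s - h) * (s + h) >= t * t / 2) by nra.
  apply div_le_cross. nra. nra.
  assert (2 * h * (t * t) <= 4 * h * (t * t / 2)) by lra.
  assert (4 * h * (t * t / 2) <= 4 * h * ((s - h) * (s + h))) by (apply Rmult_le_compat_l; lra).
  lra.
Qed.

Lemma J_iter t h N : 0 < h < 1 / 2 -> h <= t / 2 ->
  J h t <= J h (t + INR N) + INR N * (4 * h / (t * t)).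
Proof.
  intros Hh Ht. induction N.
  - simpl. rewrite Rplus_0_r. lra.
  - rewrite S_INR. assert (Hn := pos_INR N).
    replace (t + (INR N + 1)) with ((t + INR N) + 1) by ring.
    rewrite J_step by lra.
    assert (HE := e_bound t h (t + INR N) ltac:(lra) Ht ltac:(lra)). lra.
Qed.

Lemma J_small t : 0 < t -> forall eps, 0 < eps -> exists h, 0 < h < t /\ J h t < eps.
Proof.
  intros Ht eps He.
  destruct (nat_large (2 / eps)) as [m Hm]. set (N := S m) in *.
  assert (HN : 1 <= INR N) by (apply (le_INR 1); unfold N; lia).
  set (h := Rmin (Rmin (1 / 4) (t / 2)) (eps * (t * t) / (16 * INR N))).
  assert (Hh0 : 0 < h).
  { unfold h. apply Rmin_pos; [apply Rmin_pos; lra|]. apply Rdiv_lt_0_compat. apply Rmult_lt_0_compat; [lra|nra]. lra. }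
  assert (Hh1 : h <= 1 / 4) by (unfold h; generalize (Rmin_l (Rmin (1/4) (t/2)) (eps * (t * t) / (16 * INR N))) (Rmin_l (1/4) (t/2)); lra).
  assert (Hh2 : h <= t / 2) by (unfold h; generalize (Rmin_l (Rmin (1/4) (t/2)) (eps * (t * t) / (16 * INR N))) (Rmin_r (1/4) (t/2)); lra).
  assert (Hh3 : h <= eps * (t * t) / (16 * INR N)) by (unfold h; apply Rmin_r).
  exists h. split. lra.
  assert (A1 := J_iter t h N ltac:(lra) Hh2).
  assert (A2 := J_le h (t + INR N) ltac:(lra) ltac:(lra)).
  assert (A3 := lnm_bound (t + INR N) h ltac:(lra)).
  assert (A4 : (ln (t + INR N) - ln (t + INR N - h)) / h <= / INR N).
  { apply Rle_trans with (h / (t + INR N - h) / h).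
    unfold Rdiv. apply Rmult_le_compat_r. left; apply Rinv_0_lt_compat; lra. auto.
    replace (h / (t + INR N - h) / h) with (/ (t + INR N - h)) by (field; lra).
    apply Rinv_le_contravar; lra. }
  assert (A5 : / INR N < eps / 2).
  { apply (Rmult_lt_reg_l (INR N)). lra. rewrite Rinv_r by lra.
    apply (Rmult_lt_compat_l (eps / 2)) in Hm. 2: lra.
    replace (eps / 2 * (2 / eps)) with 1 in Hm by (field; lra). lra. }
  assert (A6 : INR N * (4 * h / (t * t)) <= eps / 4).
  { replace (INR N * (4 * h / (t * t))) with (4 * INR N / (t * t) * h) by (field; lra).
    apply Rle_trans with (4 * INR N / (t * t) * (eps * (t * t) / (16 * INR N))).
    apply Rmult_le_compat_l; auto. apply Rdiv_le_0_compat; nra.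
    right. field. split; lra. }
  lra.
Qed.

Lemma LG_derivable t : 0 < t -> exists D, derivable_pt_lim LG t D.
Proof.
  intros Ht. apply conv_deriv; auto. apply LG_convex. apply J_small; auto.
Qed.

Lemma digamma_LG t : 0 < t -> derivable_pt_lim LG t (digamma t).
Proof.
  intros Ht. destruct (LG_derivable t Ht) as [D HD].
  assert (HG : is_derive Gamma t (Gamma t * D)).
  { apply (is_derive_ext_loc (fun s => exp (LG s))).
    - apply (filter_imp (fun y => 0 < y)). intros y Hy. unfold LG. apply exp_ln, Gamma_pos; auto.
      apply locally_pos; auto.
    - apply is_derive_Reals.
      replace (Gamma t * D) with (exp (LG t) * D).
      apply (derivable_pt_lim_comp LG exp t D (exp (LG t))); auto.
      apply derivable_pt_lim_exp.
      unfold LG. rewrite exp_ln; auto. apply Gamma_pos; auto. }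
  unfold digamma. rewrite (is_derive_unique _ _ _ HG).
  replace (Gamma t * D / Gamma t) with D; auto. field. apply Rgt_not_eq, Gamma_pos; auto.
Qed.

Lemma tangent f x0 x D : (forall a b l, 0 < a -> 0 < b -> 0 <= l <= 1 ->
  f (l * a + (1 - l) * b) <= l * f a + (1 - l) * f b) ->
  0 < x0 -> 0 < x -> derivable_pt_lim f x0 D -> f x0 + D * (x - x0) <= f x.
Proof.
  intros fconv Hx0 Hx HD.
  destruct (Rtotal_order x x0) as [Hlt|[Heq|Hgt]].
  - assert (Hs : slope f x x0 <= D).
    { destruct (Rle_or_lt (slope f x x0) D) as [H|H]; auto. exfalso.
      destruct (HD (slope f x x0 - D) ltac:(lra)) as [d Hd].
      set (h := - Rmin (d / 2) ((x0 - x) / 2)).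
      assert (Hh1 : 0 < Rmin (d / 2) ((x0 - x) / 2)) by (apply Rmin_pos; generalize (cond_pos d); lra).
      assert (Hh2 : Rmin (d / 2) ((x0 - x) / 2) <= d / 2) by apply Rmin_l.
      assert (Hh3 : Rmin (d / 2) ((x0 - x) / 2) <= (x0 - x) / 2) by apply Rmin_r.
      specialize (Hd h ltac:(unfold h; lra) ltac:(unfold h; rewrite Rabs_Ropp, Rabs_right; generalize (cond_pos d); lra)).
      assert (Eq : (f (x0 + h) - f x0) / h = slope f (x0 + h) x0).
      { rewrite slope_sym. unfold slope. replace (x0 + h - x0) with h by ring. auto. }
      rewrite Eq in Hd.
      assert (A := slope_mono2 f fconv x (x0 + h) x0 Hx ltac:(unfold h; lra) ltac:(unfold h; lra)).
      apply Rabs_def2 in Hd. lra. }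
    unfold slope in Hs.
    assert (Hs2 : (f x0 - f x) <= D * (x0 - x)).
    { apply (Rmult_le_compat_r (x0 - x)) in Hs; [|lra].
      replace ((f x0 - f x) / (x0 - x) * (x0 - x)) with (f x0 - f x) in Hs by (field; lra). auto. }
    lra.
  - subst. lra.
  - assert (Hs : D <= slope f x0 x).
    { destruct (Rle_or_lt D (slope f x0 x)) as [H|H]; auto. exfalso.
      destruct (HD (D - slope f x0 x) ltac:(lra)) as [d Hd].
      set (h := Rmin (d / 2) ((x - x0) / 2)).
      assert (Hh1 : 0 < h) by (apply Rmin_pos; generalize (cond_pos d); lra).
      assert (Hh2 : h <= d / 2) by apply Rmin_l.
      assert (Hh3 : h <= (x - x0) / 2) by apply Rmin_r.
      specialize (Hd h ltac:(lra) ltac:(rewrite Rabs_right; generalize (cond_pos d); lra)).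
      assert (Eq : (f (x0 + h) - f x0) / h = slope f x0 (x0 + h)).
      { unfold slope. replace (x0 + h - x0) with h by ring. auto. }
      rewrite Eq in Hd.
      assert (A := slope_mono1 f fconv x0 (x0 + h) x Hx0 ltac:(lra) ltac:(lra)).
      apply Rabs_def2 in Hd. lra. }
    unfold slope in Hs.
    apply (Rmult_le_compat_r (x - x0)) in Hs; [|lra].
    replace ((f x - f x0) / (x - x0) * (x - x0)) with (f x - f x0) in Hs by (field; lra).
    lra.
Qed.

Definition Hf (c x : R) := (c + LG x) / (x - 1).

Lemma Hf_min c x0 x : 1 < x0 -> (x0 - 1) * digamma x0 - (c + LG x0) = 0 -> 1 < x ->
  Hf c x0 <= Hf c x.
Proof.
  intros H0 Hphi Hx.
  assert (T := tangent LG x0 x (digamma x0) LG_convex ltac:(lra) ltac:(lra) (digamma_LG x0 ltac:(lra))).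
  assert (E0 : Hf c x0 = digamma x0) by (unfold Hf; apply (Rmult_eq_reg_r (x0 - 1)); [|lra];
    unfold Rdiv; rewrite Rmult_assoc, Rinv_l by lra; lra).
  rewrite E0. unfold Hf. apply (Rmult_le_reg_r (x - 1)); [lra|].
  unfold Rdiv. rewrite Rmult_assoc, Rinv_l, Rmult_1_r by lra. nra.
Qed.

Lemma Hf_deriv c x : 1 < x ->
  derivable_pt_lim (Hf c) x (((x - 1) * digamma x - (c + LG x)) / (x - 1) ^ 2).
Proof.
  intros Hx.
  assert (D1 : derivable_pt_lim (fun y => c + LG y) x (digamma x)).
  { assert (H := derivable_pt_lim_plus (fun _ => c) LG x 0 (digamma x)
       (derivable_pt_lim_const c x) (digamma_LG x ltac:(lra))).
    rewrite Rplus_0_l in H. exact H. }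
  assert (D2 : derivable_pt_lim (fun y => y - 1) x 1).
  { assert (H := derivable_pt_lim_minus id (fun _ => 1) x 1 0 (derivable_pt_lim_id x) (derivable_pt_lim_const 1 x)).
    rewrite Rminus_0_r in H. exact H. }
  assert (A := derivable_pt_lim_div (fun y => c + LG y) (fun y => y - 1) x (digamma x) 1 D1 D2 ltac:(lra)).
  unfold Hf. replace (((x - 1) * digamma x - (c + LG x)) / (x - 1) ^ 2)
    with ((digamma x * (x - 1) - 1 * (c + LG x)) / Rsqr (x - 1)) by (unfold Rsqr; field; lra).
  exact A.
Qed.

Lemma Hf_unique c y z : 1 < y -> 1 < z ->
  (y - 1) * digamma y - (c + LG y) = 0 -> (z - 1) * digamma z - (c + LG z) = 0 -> y = z.
Proof.
  intros Hy Hz Py Pz.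
  destruct (Req_dec y z) as [E|Ne]; auto. exfalso.
  assert (M1 := Hf_min c y z Hy Py Hz). assert (M2 := Hf_min c z y Hz Pz Hy).
  set (m := Hf c y).
  assert (Ey : c + LG y = m * (y - 1)) by (unfold m, Hf; field; lra).
  assert (Ez : c + LG z = m * (z - 1)) by (assert (Hf c z = m) by (unfold m; lra);
    rewrite <- H; unfold Hf; field; lra).
  set (w := (y + z) / 2).
  assert (Hw : 1 < w) by (unfold w; lra).
  assert (M3 := Hf_min c y w Hy Py Hw).
  assert (Ew : m * (w - 1) <= c + LG w).
  { unfold Hf in M3. fold m in M3. apply (Rmult_le_compat_r (w - 1)) in M3; [|lra].
    replace ((c + LG w) / (w - 1) * (w - 1)) with (c + LG w) in M3 by (field; lra). auto. }
  assert (C1 : LG (/ 2 * (y + 1) + (1 - / 2) * (z + 1)) <= / 2 * LG (y + 1) + (1 - / 2) * LG (z + 1))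
    by (apply LG_convex; lra).
  replace (/ 2 * (y + 1) + (1 - / 2) * (z + 1)) with (w + 1) in C1 by (unfold w; field).
  rewrite !LG_succ in C1 by lra.
  assert (Lw : ln w <= (ln y + ln z) / 2) by (unfold w in *; lra).
  assert (Lw2 : ln (w * w) <= ln (y * z)) by (rewrite !ln_mult by lra; lra).
  assert (Lw3 : w * w <= y * z).
  { destruct (Rle_or_lt (w * w) (y * z)) as [H|H]; auto.
    apply ln_increasing in H; [lra|nra]. }
  unfold w in Lw3. assert (0 < (y - z) * (y - z)) by (assert (y - z <> 0) by lra; nra).
  nra.
Qed.

Lemma LG_2 : LG 2 = 0.
Proof. replace 2 with (1 + 1) by ring. rewrite LG_succ by lra. rewrite LG_1, ln_1. ring. Qed.

Lemma Hf_exists c : 0 < c -> exists x0, 1 < x0 /\ (x0 - 1) * digamma x0 - (c + LG x0) = 0.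
Proof.
  intros Hc.
  assert (H2 : Hf c 2 = c) by (unfold Hf; rewrite LG_2; field).
  set (s := c / (2 * (1 + c))).
  assert (Hs : 0 < s < 1 / 2).
  { unfold s. split. apply Rdiv_lt_0_compat; lra.
    apply (Rmult_lt_reg_r (2 * (1 + c))). lra. unfold Rdiv. rewrite Rmult_assoc, Rinv_l by lra. lra. }
  assert (Ha : c < Hf c (1 + s)).
  { assert (B := BM_lower s 1 ltac:(lra) (Nat.le_refl 1)).
    rewrite lsum_S in B. change (lsum s 0) with 0 in B. replace (INR 1) with 1 in B by reflexivity.
    rewrite ln_1 in B. unfold Rdiv in B. rewrite Rinv_1, Rmult_1_r in B.
    assert (B2 := ln1p_upper s ltac:(lra)).
    assert (Es : s * (1 + c) = c / 2) by (unfold s; field; lra).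
    unfold Hf. replace (1 + s - 1) with s by ring.
    apply (Rmult_lt_reg_r s). lra. unfold Rdiv. rewrite Rmult_assoc, Rinv_l by lra. nra. }
  destruct (nat_large (exp (2 * c))) as [m Hm]. set (n := S m) in *.
  assert (Hn1 : 1 <= INR n) by (apply (le_INR 1); unfold n; lia).
  assert (Hln : 2 * c < ln (INR n)).
  { rewrite <- (ln_exp (2 * c)). apply ln_increasing; auto. apply exp_pos. }
  set (b := 2 * INR n + 1).
  assert (Hb : c < Hf c b).
  { assert (S1 := slope_mono3 LG LG_convex (INR n) (INR n + 1) b ltac:(lra) ltac:(lra) ltac:(unfold b; lra)).
    unfold slope in S1. rewrite Rplus_comm in S1. rewrite LG_nat_step in S1 by (unfold n; lia).
    rewrite (Rplus_comm 1 (INR n)) in S1.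
    replace (INR n + 1 - INR n) with 1 in S1 by ring. rewrite Rdiv_1_r in S1.
    replace (b - (INR n + 1)) with (INR n) in S1 by (unfold b; ring).
    assert (G0 : 0 <= LG (INR n + 1)).
    { unfold LG. rewrite Gamma_nat. rewrite <- ln_1. apply ln_le. lra.
      apply (le_INR 1). apply lt_O_fact. }
    apply (Rmult_le_compat_r (INR n)) in S1; [|lra].
    replace ((LG b - LG (INR n + 1)) / INR n * INR n) with (LG b - LG (INR n + 1)) in S1 by (field; lra).
    unfold Hf. replace (b - 1) with (2 * INR n) by (unfold b; ring).
    apply (Rmult_lt_reg_r (2 * INR n)). lra. unfold Rdiv. rewrite Rmult_assoc, Rinv_l by lra.
    nra. }
  assert (Hab : 1 + s <= b) by (unfold b; lra).
  assert (Hcont : forall x, 1 + s <= x <= b -> continuity_pt (Hf c) x).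
  { intros x Hx. apply derivable_continuous_pt. exists (((x - 1) * digamma x - (c + LG x)) / (x - 1) ^ 2).
    apply Hf_deriv. lra. }
  destruct (continuity_ab_min (Hf c) (1 + s) b Hab Hcont) as [mx [Hmin Hmx]].
  assert (M2 := Hmin 2 ltac:(unfold b; lra)).
  assert (Ma : 1 + s < mx).
  { destruct (Rle_lt_or_eq_dec (1 + s) mx (proj1 Hmx)) as [H|H]; auto. subst mx. lra. }
  assert (Mb : mx < b).
  { destruct (Rle_lt_or_eq_dec mx b (proj2 Hmx)) as [H|H]; auto. subst mx. lra. }
  exists mx. split. lra.
  assert (HD := Hf_deriv c mx ltac:(lra)).
  assert (pr : derivable_pt (Hf c) mx) by (eexists; exact HD).
  assert (Z := deriv_minimum (Hf c) (1 + s) b mx pr Ma Mb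
     (fun x H1 H2 => Hmin x (conj (Rlt_le _ _ H1) (Rlt_le _ _ H2)))).
  rewrite (derive_pt_eq_0 _ _ _ pr HD) in Z.
  assert (Hq : 0 < (mx - 1) ^ 2) by (apply pow_lt; lra).
  apply (Rmult_eq_compat_r ((mx - 1) ^ 2)) in Z.
  unfold Rdiv in Z. rewrite Rmult_assoc, Rinv_l in Z by lra. lra.
Qed.

Lemma phi_eq kappa x : 0 < kappa -> 0 < x -> phi kappa x = (x - 1) * digamma x - (ln kappa + LG x).
Proof. intros Hk Hx. unfold phi, LG. rewrite ln_mult; auto. apply Gamma_pos; auto. Qed.

Lemma part2 kappa : 0 < kappa -> 1 < kappa ->
     (exists! x0 : R, 1 < x0 /\ phi kappa x0 = 0)
     /\ forall x0 : R, 1 < x0 -> phi kappa x0 = 0 ->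
          forall alpha : R, 0 < alpha -> g kappa (/ (x0 - 1)) <= g kappa alpha.
Proof.
  intros Hk Hk1.
  assert (Hc : 0 < ln kappa) by (rewrite <- ln_1; apply ln_increasing; lra).
  split.
  - destruct (Hf_exists (ln kappa) Hc) as [x0 [H1 H2]].
    exists x0. split. split; auto. rewrite phi_eq by lra. auto.
    intros y [Hy Py]. rewrite phi_eq in Py by lra. apply (Hf_unique (ln kappa)); auto.
  - intros x0 Hx0 P0 alpha Ha. rewrite phi_eq in P0 by lra.
    assert (Hi : 0 < / (x0 - 1)) by (apply Rinv_0_lt_compat; lra).
    rewrite !g_form by auto.
    rewrite Rinv_inv. replace (1 + (x0 - 1)) with x0 by ring.
    assert (Hia : 0 < / alpha) by (apply Rinv_0_lt_compat; auto).
    assert (M := Hf_min (ln kappa) x0 (1 + / alpha) Hx0 P0 ltac:(lra)).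
    unfold Hf in M. replace (1 + / alpha - 1) with (/ alpha) in M by ring.
    replace ((ln kappa + LG (1 + / alpha)) / / alpha) with (alpha * (ln kappa + LG (1 + / alpha))) in M
      by (field; lra).
    replace ((ln kappa + LG x0) / (x0 - 1)) with (/ (x0 - 1) * (ln kappa + LG x0)) in M by (field; lra).
    assert (exp (- exp (alpha * (ln kappa + LG (1 + / alpha)))) <= exp (- exp (/ (x0 - 1) * (ln kappa + LG x0)))).
    { apply exp_le. apply Ropp_le_contravar. apply exp_le. auto. }
    lra.
Qed.

Theorem proposition2p1 (kappa : R) (hk : 0 < kappa) :
  (kappa <= 1 ->
     let L := if Rlt_dec kappa 1 then 0 else 1 - exp (- exp (- euler_gamma)) in
     is_glb_Rbar (fun y => exists alpha, 0 < alpha /\ y = g kappa alpha) (Finite L)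
     /\ is_lim (g kappa) p_infty (Finite L))
  /\
  (1 < kappa ->
     (exists! x0 : R, 1 < x0 /\ phi kappa x0 = 0)
     /\ forall x0 : R, 1 < x0 -> phi kappa x0 = 0 ->
          forall alpha : R, 0 < alpha -> g kappa (/ (x0 - 1)) <= g kappa alpha).
Proof.
  split.
  - intros H. apply part1; auto.
  - intros H. apply part2; auto.
Qed.
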